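(* Let $N\in\mathbb{N}$. Let $$\mathcal{B}(N)=\{(q_1,q_2)\in\mathbb{Z}^2\mid 4q_1^2+4q_2^2+4q_1q_2+2q_1+3q_2=N\},$$ let $\mathcal{U}(12N+7)=\{(x,y)\in\mathbb{Z}^2\mid x^2+3y^2=12N+7\}$, and let $\varphi:\mathcal{B}(N)\to\mathcal{U}(12N+7)$ be the (well-defined) map $\varphi(q_1,q_2)=(6q_2+2,\,4q_1+2q_2+1)$. Let the Klein four-group $V_4$ act on $\mathcal{U}(12N+7)$ by sign changes of each coordinate, i.e. its nontrivial elements send $(x,y)$ to $(-x,y)$, $(x,-y)$, $(-x,-y)$. Then: (1) the action of $V_4$ on $\mathcal{U}(12N+7)$ is free; (2) $\varphi(\mathcal{B}(N))$ is a complete set of representatives of the $V_4$-orbits of $\mathcal{U}(12N+7)$.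
   Context: The expression $4q_1^2+4q_2^2+4q_1q_2+2q_1+3q_2$ is the $\Lambda_0$-atomic length of the element $q=q_1\varepsilon_1+q_2\varepsilon_2-(q_1+q_2)\varepsilon_3$ of the lattice $M$ in affine type $D_4^{(3)}$, so $\mathcal{B}(N)$ parametrises the affine Grassmannian elements of type $D_4^{(3)}$ of atomic length $N$. *)

(* Defs.v *)
From mathcomp Require Import all_boot all_order all_algebra.
Set Implicit Arguments. Unset Strict Implicit. Unset Printing Implicit Defensive.
Import Order.TTheory GRing.Theory Num.Theory.
Local Open Scope ring_scope.

Definition inB (N : nat) (q : int * int) : Prop :=
  4 * q.1 ^+ 2 + 4 * q.2 ^+ 2 + 4 * q.1 * q.2 + 2 * q.1 + 3 * q.2 = N%:Z.

Definition inU (M : int) (p : int * int) : Prop :=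
  p.1 ^+ 2 + 3 * p.2 ^+ 2 = M.

Definition phi (q : int * int) : int * int :=
  (6 * q.2 + 2, 4 * q.1 + 2 * q.2 + 1).

(* The Klein four-group V4 = Z/2 x Z/2, realised as bool * bool (with
   componentwise xor as group law; (false,false) is the identity).
   (b1,b2) acts by changing the sign of x iff b1, of y iff b2. *)
Definition V4 := (bool * bool)%type.
Definition v4_one : V4 := (false, false).
Definition v4act (g : V4) (p : int * int) : int * int :=
  ((if g.1 then - p.1 else p.1), (if g.2 then - p.2 else p.2)).

Definition same_orbit (u v : int * int) : Prop := exists g : V4, v = v4act g u.

(* Main.v *)
Require Import Defs.
From mathcomp Require Import all_boot all_order all_algebra.
From mathcomp Require Import zify.
Import Order.TTheory GRing.Theory Num.Theory.
Local Open Scope ring_scope.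

Lemma dec12 (x : int) : exists a (r : nat), (r < 12)%N /\ x = 12*a + r%:Z.
Proof. exists (x %/ 12)%Z, (absz (x %% 12)%Z). split; lia. Qed.

Lemma phi_inU N q : inB N q -> inU (12 * N%:Z + 7) (phi q).
Proof. case: q => a b; rewrite /inB /inU /phi /= !expr2; lia. Qed.

Lemma inU_phi N q : inU (12 * N%:Z + 7) (phi q) -> inB N q.
Proof. case: q => a b; rewrite /inB /inU /phi /= !expr2; lia. Qed.

Lemma inU_act M g u : inU M u -> inU M (v4act g u).
Proof.
case: g u => [b1 b2] [x y]; rewrite /inU /v4act /=.
by case: b1; case: b2; rewrite ?sqrrN.
Qed.

Lemma modfacts N x y : x ^+ 2 + 3 * y ^+ 2 = 12 * N%:Z + 7 ->
  ((x %% 6 = 2 \/ x %% 6 = 4) /\ y %% 2 = 1)%Z.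
Proof.
have [a [r [hr ->]]] := dec12 x.
have [b [s [hs ->]]] := dec12 y.
rewrite !expr2.
do 12 (case: r hr => [|r] hr; [do 12 (case: s hs => [|s] hs; [move=> H; lia|]); by [] |]).
by [].
Qed.

Arguments modfacts {N x y}.

Theorem theorem8p27 (N : nat) :
  (* phi is well defined B(N) -> U(12N+7) *)
  (forall q, inB N q -> inU (12 * N%:Z + 7) (phi q)) /\
  (* (1) the V4 action on U(12N+7) is free *)
  (forall (u : int * int) (g : V4), inU (12 * N%:Z + 7) u ->
     v4act g u = u -> g = v4_one) /\
  (* (2) phi(B(N)) is a complete set of representatives of the V4-orbits *)
  (forall u, inU (12 * N%:Z + 7) u ->
     exists q, inB N q /\ same_orbit u (phi q)) /\
  (forall q q', inB N q -> inB N q' ->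
     same_orbit (phi q) (phi q') -> phi q = phi q').
Proof.
split; first exact: phi_inU.
split.
  case=> x y [b1 b2] hU; rewrite /v4act /= => [[e1 e2]].
  have [[h6|h6] h2] := modfacts hU; rewrite /= in h6 h2.
  - by case: b1 e1; case: b2 e2 => //= *; exfalso; lia.
  - by case: b1 e1; case: b2 e2 => //= *; exfalso; lia.
split.
  case=> x y hU.
  have [[h6|h6] h2] := modfacts hU; rewrite /= in h6 h2.
  - pose q2 := (x %/ 6)%Z.
    pose t := y - 2 * q2 - 1.
    have [h4|h4] : (t %% 4 = 0 \/ t %% 4 = 2)%Z by lia.
    + have E : phi ((t %/ 4)%Z, q2) = v4act (false, false) (x, y).
        rewrite /phi /v4act /=; congr (_, _); lia.
      exists ((t %/ 4)%Z, q2); split; last by exists (false, false).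
      by apply: inU_phi; rewrite E; apply: inU_act.
    + have E : phi (- (t %/ 4)%Z - q2 - 1, q2) = v4act (false, true) (x, y).
        rewrite /phi /v4act /=; congr (_, _); lia.
      exists (- (t %/ 4)%Z - q2 - 1, q2); split; last by exists (false, true).
      by apply: inU_phi; rewrite E; apply: inU_act.
  - pose q2 := - (x %/ 6)%Z - 1.
    pose t := y - 2 * q2 - 1.
    have [h4|h4] : (t %% 4 = 0 \/ t %% 4 = 2)%Z by lia.
    + have E : phi ((t %/ 4)%Z, q2) = v4act (true, false) (x, y).
        rewrite /phi /v4act /=; congr (_, _); lia.
      exists ((t %/ 4)%Z, q2); split; last by exists (true, false).
      by apply: inU_phi; rewrite E; apply: inU_act.
    + have E : phi (- (t %/ 4)%Z - q2 - 1, q2) = v4act (true, true) (x, y).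
        rewrite /phi /v4act /=; congr (_, _); lia.
      exists (- (t %/ 4)%Z - q2 - 1, q2); split; last by exists (true, true).
      by apply: inU_phi; rewrite E; apply: inU_act.
case=> a b [a' b'] _ _ [[b1 b2]]; rewrite /phi /v4act /= => [[e1 e2]].
rewrite e1 e2.
by case: b1 e1; case: b2 e2 => //= *; (congr (_, _); lia).
Qed.
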